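(* Let $t\in[1,2]$, $\rho_1=\frac{\|p_{\le A}\|_r^{r/t}}{\sqrt n\,\|p_{\le I}\|_r^{r/4}}$ (set to $0$ if $A=-\infty$) and $\rho_2=\frac{\|p_{>I}\|_1^{\frac{2-t}{t}}}{n^{\frac{2t-2}{t}}}$. Then $$\rho_1+\rho_2+\frac1n\asymp_\eta\sqrt{\frac{\|p_{\le I}\|_r}{n}}+\rho_2+\frac1n.$$
   Context: $p\in[0,1]^N$ with $p_1\ge\dots\ge p_N$ and $\max_jp_j\le1/2$; $n\ge2$; $\eta\in(0,1)$. $\|x\|_s=(\sum_j|x_j|^s)^{1/s}$; $r=\frac{2t}{4-t}$, $b=\frac{4-2t}{4-t}$; $x_{\le u}=(x_1,\dots,x_u,0,\dots,0)$, $x_{>u}=(0,\dots,0,x_{u+1},\dots,x_N)$. $I=\min\{J\in\{0,\dots,N\}:\sum_{i>J}p_i^2\le c_I/n^2\}$; $A=\max\{a\in\{1,\dots,I\}:p_a^{b/2}\ge c_A/(\sqrt n(\sum_{i\le I}p_i^r)^{1/4})\}$ with $\max\emptyset=-\infty$ and $x_{\le-\infty}=0$; $c_I,c_A>0$ are small constants depending only on $\eta$. $\asymp_\eta$ means equality up to multiplicative constants depending only on $\eta$. *)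

(* Defs.v *)
From HB Require Import structures.
From mathcomp Require Import all_boot all_order all_algebra.
From mathcomp Require Import all_classical all_reals all_analysis.
Set Implicit Arguments. Unset Strict Implicit. Unset Printing Implicit Defensive.
Import Order.TTheory GRing.Theory Num.Theory.
Local Open Scope ring_scope.

(* Vectors x in R^N are functions nat -> R, coordinates indexed 1..N. *)

Definition lnorm {R : realType} (N : nat) (s : R) (x : nat -> R) : R :=
  (\sum_(1 <= j < N.+1) `|x j| `^ s) `^ s^-1.

Definition trunc_le {R : realType} (u : nat) (x : nat -> R) : nat -> R :=
  fun j => if (j <= u)%N then x j else 0.
Definition trunc_gt {R : realType} (u : nat) (x : nat -> R) : nat -> R :=
  fun j => if (u < j)%N then x j else 0.

Definition tail_sq {R : realType} (N : nat) (p : nat -> R) (J : nat) : R :=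
  \sum_(J.+1 <= i < N.+1) p i ^+ 2.

(* I = min { J in {0..N} : sum_{i>J} p_i^2 <= c_I / n^2 }
   (find on iota 0 (N+1) returns the first such J; J = N always qualifies
    when c_I >= 0). *)
Definition idxI {R : realType} (cI : R) (n N : nat) (p : nat -> R) : nat :=
  find (fun J => tail_sq N p J <= cI / (n%:R ^+ 2)) (iota 0 N.+1).

Definition rexp {R : realType} (t : R) : R := 2 * t / (4 - t).
Definition bexp {R : realType} (t : R) : R := (4 - 2 * t) / (4 - t).

(* A = max { a in {1..I} : p_a^(b/2) >= c_A / (sqrt n (sum_{i<=I} p_i^r)^(1/4)) },
   None encodes max(empty) = -infinity. *)
Definition idxA {R : realType} (cI cA t : R) (n N : nat) (p : nat -> R)
  : option nat :=
  let I := idxI cI n N p in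
  let S := \sum_(1 <= i < I.+1) p i `^ rexp t in
  let cand := [seq a <- iota 1 I |
                cA / (Num.sqrt (n%:R) * S `^ (4 : R)^-1) <= p a `^ (bexp t / 2)] in
  if cand is [::] then None else Some (last 0%N cand).

Definition rho1 {R : realType} (cI cA t : R) (n N : nat) (p : nat -> R) : R :=
  let r := rexp t in
  let I := idxI cI n N p in
  match idxA cI cA t n N p with
  | None => 0
  | Some A => (lnorm N r (trunc_le A p)) `^ (r / t)
              / (Num.sqrt (n%:R) * (lnorm N r (trunc_le I p)) `^ (r / 4))
  end.

Definition rho2 {R : realType} (cI t : R) (n N : nat) (p : nat -> R) : R :=
  let I := idxI cI n N p in
  (lnorm N 1 (trunc_gt I p)) `^ ((2 - t) / t) / (n%:R) `^ ((2 * t - 2) / t).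

(* Main.v *)
Require Import Defs.
From HB Require Import structures.
From mathcomp Require Import all_boot all_order all_algebra.
From mathcomp Require Import all_classical all_reals all_analysis.
From mathcomp Require Import ring lra.
Import Order.TTheory GRing.Theory Num.Theory.
Local Open Scope ring_scope.

Section S.
Variable R : realType.

Lemma lnle (x y : R) : 0 < x -> 0 < y -> ln x <= ln y -> x <= y.
Proof. by move=> x0 y0; rewrite ler_ln ?posrE. Qed.

Lemma ln_sqrt (x : R) : 0 < x -> ln (Num.sqrt x) = ln x / 2.
Proof. by move=> x0; rewrite -powR12_sqrt ?ltW // ln_powR mulrC. Qed.

Lemma core (cA0 kap t nn T pI M : R) :
 0 < cA0 -> 0 < kap -> 1 <= t <= 2 -> 0 < nn -> 0 < T -> 0 < pI -> 0 < M ->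
 pI `^ (bexp t / 2) < cA0 / (Num.sqrt nn * T `^ (4:R)^-1) ->
 kap <= nn ^+ 2 * pI * M ->
 Num.sqrt (T `^ (rexp t)^-1 / nn) <=
   expR (3 * `|ln cA0| + `|ln kap|) * (M `^ ((2 - t) / t) / nn `^ ((2 * t - 2) / t)).
Proof.
move=> c0 k0 /andP[t1 t2] n0 T0 p0 M0 H1 H2.
have sn0 : 0 < Num.sqrt nn by rewrite sqrtr_gt0.
have T4 : 0 < T `^ (4:R)^-1 by apply: powR_gt0.
apply: lnle.
- by rewrite sqrtr_gt0 divr_gt0 // powR_gt0.
- by rewrite mulr_gt0 ?expR_gt0 // divr_gt0 // powR_gt0.
have P1 : 0 < cA0 / (Num.sqrt nn * T `^ (4:R)^-1) by rewrite divr_gt0 ?mulr_gt0.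
move: H1; rewrite -ltr_ln ?posrE ?powR_gt0 // => H1.
have E1 : ln (cA0 / (Num.sqrt nn * T `^ (4:R)^-1)) = ln cA0 - (ln nn / 2 + (4:R)^-1 * ln T).
  by rewrite ln_div ?posrE ?mulr_gt0 // lnM ?posrE // ln_powR ln_sqrt.
rewrite E1 ln_powR in H1.
have P2 : 0 < nn ^+ 2 * pI * M by rewrite !mulr_gt0 // exprn_gt0.
move: H2; rewrite -ler_ln ?posrE // => H2.
have E2 : ln (nn ^+ 2 * pI * M) = ln nn *+ 2 + ln pI + ln M.
  by rewrite !lnM ?posrE ?mulr_gt0 ?exprn_gt0 // lnXn.
rewrite E2 in H2.
have E3 : ln (Num.sqrt (T `^ (rexp t)^-1 / nn)) = ((rexp t)^-1 * ln T - ln nn) / 2.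
  by rewrite ln_sqrt ?divr_gt0 ?powR_gt0 // ln_div ?posrE ?powR_gt0 // ln_powR.
have E4 : ln (expR (3 * `|ln cA0| + `|ln kap|) * (M `^ ((2 - t) / t) / nn `^ ((2 * t - 2) / t)))
   = (3 * `|ln cA0| + `|ln kap|) + ((2 - t) / t * ln M - (2 * t - 2) / t * ln nn).
  by rewrite lnM ?posrE ?expR_gt0 ?divr_gt0 ?powR_gt0 // expRK ln_div ?posrE ?powR_gt0 // !ln_powR.
rewrite E3 E4.
rewrite /rexp /bexp in H1 *.
set Lc := ln cA0 in H1 *; set Lk := ln kap in H2 *.
set Ln := ln nn in H1 H2 *; set LT := ln T in H1 *; set Lp := ln pI in H1 H2 *.
set LM := ln M in H2 *.
have t0 : 0 < t by lra.
have t4 : 4 - t != 0 by rewrite subr_eq0; apply/eqP; lra.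
have tn0 : t != 0 by rewrite gt_eqF.
set u := (4 - t) / t.
have u1 : 1 <= u by rewrite /u ler_pdivlMr //; lra.
have u3 : u <= 3 by rewrite /u ler_pdivrMr //; lra.
set hb := (4 - 2 * t) / (4 - t) / 2 in H1 *.
have u0 : 0 < u by lra.
have e_eq : (2 - t) / t = u * hb by rewrite /u /hb; field; rewrite t4 tn0.
have ir_eq : (2 * t / (4 - t))^-1 = u / 2 by rewrite /u; field; rewrite t4 tn0.
have f_eq : (2 * t - 2) / t = (u + 1) / 2 - 2 * (u * hb) by rewrite /u /hb; field; rewrite t4 tn0.
have e0 : 0 <= u * hb by rewrite -e_eq divr_ge0 //; lra.
have e1 : u * hb <= 1 by rewrite -e_eq ler_pdivrMr //; lra.
rewrite e_eq ir_eq f_eq.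
have F1 : u * (hb * Lp) + u * (Ln * 2^-1) + u * (4^-1 * LT) < u * Lc.
  rewrite -!mulrDr ltr_pM2l //. lra.
have F2 : (u * hb) * Lk <= (u * hb) * (Ln *+ 2 + Lp + LM) by apply: ler_wpM2l.
have F3 : u * Lc <= 3 * `|Lc|.
  apply: (le_trans (ler_norm _)); rewrite normrM ger0_norm; last lra.
  by apply: ler_wpM2r => //.
have F4 : - `|Lk| <= (u * hb) * Lk.
  have : - ((u * hb) * `|Lk|) <= (u * hb) * Lk.
    by rewrite -mulrN; apply: ler_wpM2l => //; rewrite lerNl ler_normr lexx orbT.
  apply: le_trans; rewrite lerN2 -[leRHS]mul1r; apply: ler_wpM2r => //.
nra.
Qed.

Lemma ln_frac (x y z : R) : 0 < x -> 0 < y -> 0 < z -> ln (x / (y * z)) = ln x - (ln y + ln z).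
Proof.
move=> x0 y0 z0; have yz : 0 < y * z by apply: mulr_gt0.
by rewrite ln_div ?posrE // lnM ?posrE.
Qed.

Lemma ln_div' (x y : R) : 0 < x -> 0 < y -> ln (x / y) = ln x - ln y.
Proof. by move=> x0 y0; rewrite ln_div ?posrE. Qed.

Lemma rexp_pos (t : R) : 1 <= t <= 2 -> 0 < rexp t.
Proof. by move=> /andP[t1 t2]; rewrite /rexp divr_gt0 //; lra. Qed.

Lemma rt_id (t : R) : 1 <= t <= 2 -> rexp t / t - rexp t / 4 = 2^-1.
Proof.
move=> /andP[t1 t2]; rewrite /rexp; field.
have t4 : 4 - t != 0 by rewrite subr_eq0; apply/eqP; lra.
have tn0 : t != 0 by rewrite gt_eqF //; lra.
by rewrite t4 tn0.
Qed.

Lemma rho1_le (t nn LA LI : R) : 1 <= t <= 2 -> 0 < nn -> 0 <= LA -> LA <= LI ->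
  LA `^ (rexp t / t) / (Num.sqrt nn * LI `^ (rexp t / 4)) <= Num.sqrt (LI / nn).
Proof.
move=> ht n0 A0 AI.
have r0 := rexp_pos t ht.
have t0 : 0 < t by case/andP: ht => t1 _; lra.
have rt0 : rexp t / t != 0 by rewrite gt_eqF // divr_gt0.
have [->|Apos] := eqVneq LA 0.
  by rewrite powR0 // mul0r sqrtr_ge0.
have Ap : 0 < LA by rewrite lt_neqAle eq_sym Apos.
have Ip : 0 < LI by apply: lt_le_trans AI.
apply: lnle.
- by apply: divr_gt0; [apply: powR_gt0 | apply: mulr_gt0; [rewrite sqrtr_gt0| apply: powR_gt0]].
- by rewrite sqrtr_gt0; apply: divr_gt0.
rewrite ln_frac ?powR_gt0 ?sqrtr_gt0 // !ln_powR (ln_sqrt _ n0) (ln_sqrt _ (divr_gt0 Ip n0)).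
rewrite ln_div' //.
have lAI : ln LA <= ln LI by rewrite ler_ln ?posrE.
have h := rt_id t ht.
have : rexp t / t * ln LA <= rexp t / t * ln LI by apply: ler_wpM2l => //; rewrite ltW // divr_gt0.
have -> : rexp t / t = rexp t / 4 + 2^-1 by rewrite -h; ring.
lra.
Qed.

Lemma rho1_ge (t nn LI : R) : 1 <= t <= 2 -> 0 < nn -> 0 <= LI ->
  Num.sqrt (LI / nn) <= LI `^ (rexp t / t) / (Num.sqrt nn * LI `^ (rexp t / 4)).
Proof.
move=> ht n0 I0.
have [->|Ipos] := eqVneq LI 0; first by rewrite mul0r sqrtr0 divr_ge0 ?mulr_ge0 ?sqrtr_ge0 ?powR_ge0.
have Ip : 0 < LI by rewrite lt_neqAle eq_sym Ipos.
apply: lnle.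
- by rewrite sqrtr_gt0; apply: divr_gt0.
- by apply: divr_gt0; [apply: powR_gt0 | apply: mulr_gt0; [rewrite sqrtr_gt0| apply: powR_gt0]].
rewrite ln_frac ?powR_gt0 ?sqrtr_gt0 // !ln_powR (ln_sqrt _ n0) (ln_sqrt _ (divr_gt0 Ip n0)).
rewrite ln_div' //.
have h := rt_id t ht.
have -> : rexp t / t = rexp t / 4 + 2^-1 by rewrite -h; ring.
lra.
Qed.

Lemma kappa_le (cI0 nn p l : R) : 0 < cI0 -> 0 < nn -> 0 <= p -> 0 <= l ->
  cI0 / nn ^+ 2 < p * (p + l) ->
  Num.min 1 (cI0 / 2) <= nn ^+ 2 * p * Num.max l (1 / nn).
Proof.
move=> c0 n0 p0 l0 H.
have n2 : 0 < nn ^+ 2 by rewrite exprn_gt0.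
have H' : cI0 < nn ^+ 2 * (p * (p + l)).
  rewrite -[X in X < _](@divfK _ (nn ^+ 2)) ?gt_eqF // mulrC.
  by rewrite ltr_pM2l.
have [lp|pl] := leP l p.
- have h1 : cI0 / 2 < (nn * p) ^+ 2.
    have a1 : p * (p + l) <= p * (p + p) by apply: ler_wpM2l => //; lra.
    have a2 : nn ^+ 2 * (p * (p + l)) <= nn ^+ 2 * (p * (p + p)) by apply: ler_wpM2l => //; exact: ltW.
    rewrite exprMn; lra.
  have h2 : Num.min 1 (cI0 / 2) <= nn * p.
    have np0 : 0 <= nn * p by rewrite mulr_ge0 // ltW.
    rewrite ge_min; have [np1|np1] := leP 1 (nn * p); first by apply/orP; left.
    apply/orP; right; apply: ltW; apply: lt_le_trans h1 _.
    rewrite expr2; rewrite -[leRHS]mulr1; apply: ler_wpM2l => //; exact: ltW.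
  apply: (le_trans h2).
  have : 1 / nn <= Num.max l (1 / nn) by rewrite le_max lexx orbT.
  move/(ler_wpM2l (_ : 0 <= nn ^+ 2 * p)) => h3.
  apply: le_trans (h3 _); last by rewrite mulr_ge0 // ltW.
  have -> : nn ^+ 2 * p * (1 / nn) = nn * p by field; rewrite gt_eqF.
  by [].
- have h1 : cI0 / 2 < nn ^+ 2 * p * l.
    have a1 : p * (p + l) <= l * (l + l) by nra.
    have a2 : nn ^+ 2 * (p * (p + l)) <= nn ^+ 2 * (p * (l + l)) by apply: ler_wpM2l; [exact: ltW| nra].
    lra.
  rewrite ge_min; apply/orP; right; apply: ltW; apply: (lt_le_trans h1).
  apply: ler_wpM2l; first by rewrite mulr_ge0 // ltW.
  by rewrite le_max lexx.
Qed.

Lemma rho2_ge (t nn l : R) : 1 <= t <= 2 -> 0 < nn -> 0 <= l ->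
  Num.max l (1 / nn) `^ ((2 - t) / t) / nn `^ ((2 * t - 2) / t) <=
  l `^ ((2 - t) / t) / nn `^ ((2 * t - 2) / t) + 1 / nn.
Proof.
move=> /andP[t1 t2] n0 l0.
have [hl|hl] := leP (1 / nn) l.
  rewrite lerDl divr_ge0 //; exact: ltW.
have -> : (1 / nn) `^ ((2 - t) / t) / nn `^ ((2 * t - 2) / t) = 1 / nn.
  have tn0 : t != 0 by rewrite gt_eqF //; lra.
  apply: ln_inj; rewrite ?posrE ?divr_gt0 ?powR_gt0 ?divr_gt0 //.
  rewrite ln_div' ?powR_gt0 ?divr_gt0 // !ln_powR ln_div' // ln1.
  have -> : (2 * t - 2) / t = 1 - (2 - t) / t by field.
  ring.
by rewrite lerDr divr_ge0 ?powR_ge0.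
Qed.

Lemma idxI_le (cI0 : R) n N p : 0 < cI0 -> (idxI cI0 n N p <= N)%N.
Proof.
move=> c0; rewrite /idxI.
have h : has (fun J => tail_sq N p J <= cI0 / (n%:R ^+ 2)) (iota 0 N.+1).
  apply/hasP; exists N; first by rewrite mem_iota leqnn.
  by rewrite /tail_sq big_geq // divr_ge0 // ?sqr_ge0 ?ltW.
by move: h; rewrite has_find size_iota ltnS.
Qed.

Lemma idxI_prev (cI0 : R) n N p : 0 < cI0 -> (0 < idxI cI0 n N p)%N ->
  cI0 / (n%:R ^+ 2) < tail_sq N p (idxI cI0 n N p).-1.
Proof.
move=> c0 I0.
have hI := @idxI_le cI0 n N p c0.
have := @before_find _ 0%N (fun J => tail_sq N p J <= cI0 / (n%:R ^+ 2)) (iota 0 N.+1) (idxI cI0 n N p).-1.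
rewrite nth_iota ?add0n; last by rewrite ltnS; apply: leq_trans hI; apply: leq_pred.
rewrite /idxI in I0 hI * => /(_ (eq_ind_r is_true I0 (ltn_predL _))) /negbT.
by rewrite -ltNge.
Qed.

Lemma tail_split N (p : nat -> R) I : (0 < I)%N -> (I <= N)%N ->
  tail_sq N p I.-1 = p I ^+ 2 + tail_sq N p I.
Proof.
move=> I0 IN; rewrite /tail_sq big_ltn; last by rewrite ltnS prednK.
by rewrite prednK.
Qed.

Lemma tail_le N (p : nat -> R) I :
  (forall i, (1 <= i <= N)%N -> 0 <= p i <= 1 / 2) ->
  (forall i j, (1 <= i <= j)%N -> (j <= N)%N -> p j <= p i) ->
  (0 < I)%N ->
  tail_sq N p I <= p I * \sum_(I.+1 <= j < N.+1) p j.
Proof.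
move=> hp hm I0; rewrite /tail_sq mulr_sumr.
rewrite big_nat_cond [X in _ <= X]big_nat_cond; apply: ler_sum => i /andP[/andP[h1 h2] _].
have iN : (i <= N)%N by rewrite -ltnS.
have /andP[pi0 _] : 0 <= p i <= 1/2 by apply: hp; rewrite iN andbT (leq_trans _ h1).
have piI : p i <= p I by apply: hm => //; rewrite I0 ltnW.
by rewrite expr2 ler_wpM2r.
Qed.

Lemma l1_eq N (p : nat -> R) I :
  (forall i, (1 <= i <= N)%N -> 0 <= p i <= 1 / 2) -> (I <= N)%N ->
  lnorm N 1 (trunc_gt I p) = \sum_(I.+1 <= j < N.+1) p j.
Proof.
move=> hp IN; rewrite /lnorm invr1 powRr1; last by apply: sumr_ge0 => j _; exact: powR_ge0.
rewrite (@big_cat_nat _ _ _ I.+1) //=.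
rewrite big_nat_cond big1 ?add0r; last first.
  move=> j /andP[/andP[_ hj] _]; rewrite /trunc_gt ltnNge -ltnS hj /= normr0 powR0 //.
apply: eq_big_nat => j /andP[h1 h2]; rewrite /trunc_gt h1.
have /andP[pj0 _] : 0 <= p j <= 1/2 by apply: hp; apply/andP; split; [exact: leq_trans (ltn0Sn I) h1 | exact: h2].
by rewrite ger0_norm // powRr1.
Qed.

Lemma LI_eq N (p : nat -> R) I (s : R) :
  (forall i, (1 <= i <= N)%N -> 0 <= p i <= 1 / 2) -> (I <= N)%N -> s != 0 ->
  \sum_(1 <= j < N.+1) `|trunc_le I p j| `^ s = \sum_(1 <= i < I.+1) p i `^ s.
Proof.
move=> hp IN s0.
rewrite (@big_cat_nat _ _ _ I.+1) //=.
rewrite [X in _ + X = _](_ : _ = 0) ?addr0; last first.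
  rewrite big_nat_cond big1 //.
  move=> j /andP[/andP[hj _] _]; rewrite /trunc_le leqNgt hj /= normr0 powR0 //.
apply: eq_big_nat => j /andP[h1 h2]; have h2' : (j <= I)%N by exact: h2.
rewrite /trunc_le h2'.
have /andP[pj0 _] : 0 <= p j <= 1/2 by apply: hp; rewrite h1 (leq_trans h2' IN).
by rewrite ger0_norm.
Qed.

Lemma LA_le N (p : nat -> R) A I (s : R) : (A <= I)%N -> s != 0 ->
  \sum_(1 <= j < N.+1) `|trunc_le A p j| `^ s <= \sum_(1 <= j < N.+1) `|trunc_le I p j| `^ s.
Proof.
move=> AI s0; apply: ler_sum => j _; rewrite /trunc_le.
case: (leqP j A) => hj.
  by rewrite (leq_trans hj AI).
by rewrite normr0 powR0 // powR_ge0.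
Qed.

Lemma cand_le (P : pred nat) I A :
  (if [seq a <- iota 1 I | P a] is [::] then None else Some (last 0%N [seq a <- iota 1 I | P a])) = Some A ->
  (A <= I)%N.
Proof.
case E: [seq a <- iota 1 I | P a] => [//|x s] [<-].
have : last x s \in x :: s by apply: mem_last.
rewrite -E mem_filter mem_iota => /andP[_ /andP[_ h]].
by rewrite -ltnS -(add1n I).
Qed.

Lemma cand_some (P : pred nat) I : (0 < I)%N -> P I ->
  (if [seq a <- iota 1 I | P a] is [::] then None else Some (last 0%N [seq a <- iota 1 I | P a])) = Some I.
Proof.
move=> I0 PI.
have -> : iota 1 I = rcons (iota 1 I.-1) I.
  by rewrite -{1}(prednK I0) -(addn1 I.-1) iotaD cats1 add1n prednK.
rewrite filter_rcons PI.
by case: [seq a <- iota 1 I.-1 | P a] => [|x s] //=; rewrite last_rcons.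
Qed.
End S.

Theorem lemmaA7 (R : realType) (cI cA : R -> R)
  (hc : forall eta : R, 0 < eta < 1 -> 0 < cI eta /\ 0 < cA eta)
  (eta : R) (heta : 0 < eta < 1) :
  exists C1 C2 : R, 0 < C1 /\ 0 < C2 /\
  forall (N n : nat) (p : nat -> R) (t : R),
    (2 <= n)%N ->
    1 <= t <= 2 ->
    (forall i, (1 <= i <= N)%N -> 0 <= p i <= 1 / 2) ->
    (forall i j, (1 <= i <= j)%N -> (j <= N)%N -> p j <= p i) ->
    let I := idxI (cI eta) n N p in
    let LHS := rho1 (cI eta) (cA eta) t n N p + rho2 (cI eta) t n N p
               + 1 / n%:R in
    let RHS := Num.sqrt (lnorm N (rexp t) (trunc_le I p) / n%:R)
               + rho2 (cI eta) t n N p + 1 / n%:R in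
    C1 * RHS <= LHS /\ LHS <= C2 * RHS.
Proof.
have [cI0 cA0] := hc eta heta.
set kap := Num.min 1 (cI eta / 2).
have kap0 : 0 < kap by rewrite lt_min ltr01 /= divr_gt0.
set K := expR (3 * `|ln (cA eta)| + `|ln kap|).
have K1 : 1 <= K.
  apply: le_trans (expR_ge1Dx _); rewrite lerDl addr_ge0 // mulr_ge0 //.
have Kdef : expR (3 * `|ln (cA eta)| + `|ln kap|) = K by [].
clearbody K.
exists (K + 1)^-1, 1; split; first by rewrite invr_gt0; lra.
split; first exact: ltr01.
move=> N n p t hn ht hp hm I LHS RHS.
have n0 : 0 < n%:R :> R by rewrite ltr0n (leq_trans _ hn).
have hI : (I <= N)%N by apply: idxI_le.
have r0 : rexp t != 0 by rewrite gt_eqF // rexp_pos.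
have ri0 : 0 <= (rexp t)^-1 by rewrite invr_ge0 ltW // rexp_pos.
set S := \sum_(1 <= i < I.+1) p i `^ rexp t.
have LIdef : lnorm N (rexp t) (trunc_le I p) = S `^ (rexp t)^-1.
  by rewrite /lnorm LI_eq.
have rho1_ge0 : 0 <= rho1 (cI eta) (cA eta) t n N p.
  rewrite /rho1; case: (idxA _ _ _ _ _ _) => [A|//].
  apply: divr_ge0; first exact: powR_ge0.
  by apply: mulr_ge0; [exact: sqrtr_ge0 | exact: powR_ge0].
have rho2_ge0 : 0 <= rho2 (cI eta) t n N p by rewrite /rho2; apply: divr_ge0; apply: powR_ge0.
have n1 : 0 <= 1 / n%:R :> R by rewrite divr_ge0 // ltW.
set Q := Num.sqrt (lnorm N (rexp t) (trunc_le I p) / n%:R).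
have Q0 : 0 <= Q by apply: sqrtr_ge0.
have up : rho1 (cI eta) (cA eta) t n N p <= Q.
  rewrite /rho1; case hA: (idxA _ _ _ _ _ _) => [A|//].
  have AI : (A <= I)%N by move: hA; rewrite /idxA; apply: cand_le.
  have LAI : lnorm N (rexp t) (trunc_le A p) <= lnorm N (rexp t) (trunc_le I p).
    rewrite /lnorm.
    have s1 := @LA_le R N p A I (rexp t) AI r0.
    have sA : 0 <= \sum_(1 <= j < N.+1) `|trunc_le A p j| `^ rexp t by apply: sumr_ge0 => j _; apply: powR_ge0.
    have sI : 0 <= \sum_(1 <= j < N.+1) `|trunc_le I p j| `^ rexp t by apply: sumr_ge0 => j _; apply: powR_ge0.
    exact: (ge0_ler_powR ri0 sA sI s1).
  exact: (@rho1_le R t n%:R (lnorm N (rexp t) (trunc_le A p)) (lnorm N (rexp t) (trunc_le I p)) ht n0 (powR_ge0 _ _) LAI).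
have low : Q <= K * LHS.
  have LHS0 : 0 <= LHS by rewrite /LHS; lra.
  have [I0|Ipos] := eqVneq I 0%N.
    rewrite /Q LIdef /S I0 big_geq; last exact: leqnn.
    rewrite powR0; last by rewrite invr_eq0.
    rewrite mul0r sqrtr0.
    have K0 : 0 <= K by lra.
    exact: mulr_ge0.
  have Ip : (0 < I)%N by rewrite lt0n.
  have pI0 : 0 <= p I by have /andP[] := hp I (introT andP (conj Ip hI)).
  set l1 := lnorm N 1 (trunc_gt I p).
  have l1e : l1 = \sum_(I.+1 <= j < N.+1) p j by apply: (@l1_eq R N p I hp hI).
  have l10 : 0 <= l1 by rewrite /l1 /lnorm powR_ge0.
  have key : cI eta / n%:R ^+ 2 < p I * (p I + l1).
    have h1 : cI eta / n%:R ^+ 2 < tail_sq N p I.-1 := @idxI_prev R (cI eta) n N p cI0 Ip.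
    rewrite (@tail_split R N p I Ip hI) in h1.
    have h2 := @tail_le R N p I hp hm Ip; rewrite -l1e in h2.
    rewrite mulrDr -expr2; lra.
  have cn : 0 < cI eta / n%:R ^+ 2 := divr_gt0 cI0 (exprn_gt0 2 n0).
  have pIpos : 0 < p I.
    rewrite lt_neqAle pI0 andbT; apply/eqP => h; move: key; rewrite -h mul0r; lra.
  have H2 := @kappa_le R (cI eta) n%:R (p I) l1 cI0 n0 pI0 l10 key.
  have LLHS : rho2 (cI eta) t n N p + 1 / n%:R <= LHS by rewrite /LHS; lra.
  have K0 : 0 <= K by lra.
  case: (boolP (cA eta / (Num.sqrt n%:R * S `^ (4:R)^-1) <= p I `^ (bexp t / 2))) => PI.
    have hA : idxA (cI eta) (cA eta) t n N p = Some I.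
      by rewrite /idxA; apply: (@cand_some (fun a => cA eta / (Num.sqrt n%:R * S `^ (4:R)^-1) <= p a `^ (bexp t / 2)) I Ip PI).
    have e1 : rho1 (cI eta) (cA eta) t n N p = lnorm N (rexp t) (trunc_le I p) `^ (rexp t / t) /
        (Num.sqrt n%:R * lnorm N (rexp t) (trunc_le I p) `^ (rexp t / 4)) by rewrite /rho1 hA.
    have h := @rho1_ge R t n%:R (lnorm N (rexp t) (trunc_le I p)) ht n0 (powR_ge0 _ _).
    rewrite -e1 in h.
    have : rho1 (cI eta) (cA eta) t n N p <= LHS by rewrite /LHS; lra.
    move=> h3; apply: (le_trans h); apply: (le_trans h3).
    by rewrite -[X in X <= _]mul1r ler_wpM2r.
  have H1 : p I `^ (bexp t / 2) < cA eta / (Num.sqrt n%:R * S `^ (4:R)^-1) by rewrite ltNge.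
  have Spos : 0 < S.
    rewrite /S big_nat_recr; last exact: Ip.
    apply: (@lt_le_trans _ _ (p I `^ rexp t)); first exact: powR_gt0.
    rewrite lerDr; apply: sumr_ge0 => i _; apply: powR_ge0.
  have Mpos : 0 < Num.max l1 (1 / n%:R).
    rewrite lt_max; apply/orP; right; exact: divr_gt0.
  have C := @core R (cA eta) kap t n%:R S (p I) (Num.max l1 (1 / n%:R)) cA0 kap0 ht n0 Spos pIpos Mpos H1 H2.
  rewrite Kdef in C.
  have D := @rho2_ge R t n%:R l1 ht n0 l10.
  have e2 : rho2 (cI eta) t n N p = l1 `^ ((2 - t) / t) / n%:R `^ ((2 * t - 2) / t) by [].
  rewrite -e2 in D.
  have eQ : Q = Num.sqrt (S `^ (rexp t)^-1 / n%:R) by rewrite /Q LIdef.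
  rewrite eQ; apply: (le_trans C); apply: (ler_wpM2l K0); exact: (le_trans D LLHS).
have eR : RHS = Q + rho2 (cI eta) t n N p + 1 / n%:R by [].
have eL : LHS = rho1 (cI eta) (cA eta) t n N p + rho2 (cI eta) t n N p + 1 / n%:R by [].
split.
- rewrite mulrC ler_pdivrMr; last by lra.
  rewrite eR mulrDr mulr1 mulrC.
  move: low; rewrite eL => low; lra.
- by rewrite mul1r eR eL; lra.
Qed.
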